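(* Let $G=(V,E,(p_{uv})_{(u,v)\in E})$ be an influence graph. For every partial realisation $\psi$, all partial realisations $\hat\psi,\hat\psi'$ with $\hat\psi\subseteq\hat\psi'$, and every $v\in V$, we have $\Delta^2_\psi(v\mid\hat\psi)\ge\Delta^2_\psi(v\mid\hat\psi')$ (the strong 2-level diffusion model is strongly adaptive submodular).
   Context: $G$ is a directed graph with activation probabilities $p_{uv}\in[0,1]$. $\mathbf L,\hat{\mathbf L}$ are independent random subsets of $E$, each containing every edge $(u,w)$ independently with probability $p_{uw}$. For $L\subseteq E$, $T\subseteq V$, $\sigma_L(T)$ is the number of nodes reachable by a directed path (length $\ge0$) in $(V,L)$ from $T$. For $T\subseteq V$, $\mathbf L^2(T):=\mathbf L\cup(\hat{\mathbf L}\cap\{(u,w)\in E:u\in T\})$. Realisations: $\Phi(u):=\{u\}\cup\{z:(u,z)\in\mathbf L\}$, $\hat\Phi(u):=\{u\}\cup\{z:(u,z)\in\hat{\mathbf L}\}$. A partial realisation $\psi$ is the restriction of $u\mapsto\{u\}\cup\{z:(u,z)\in L\}$ (for some $L\subseteq E$) to a set $dom(\psi)\subseteq V$; $\psi\subseteq\psi'$ means $dom(\psi)\subseteq dom(\psi')$ and they agree on $dom(\psi)$; $\psi\subseteq\Phi$ is the event $\Phi(u)=\psi(u)$ for all $u\in dom(\psi)$ (similarly for $\hat\Phi$). For $T\subseteq V$, $\sigma^2_{\mathbf L,\hat{\mathbf L},\psi}(T):=\sigma_{\mathbf L^2(T\setminus dom(\psi))}(T)$. Define $\Delta^2_\psi(v\mid\hat\psi):=\mathbb{E}\big[\sigma^2_{\mathbf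 L,\hat{\mathbf L},\psi}(\{v\}\cup dom(\psi)\cup dom(\hat\psi))-\sigma^2_{\mathbf L,\hat{\mathbf L},\psi}(dom(\psi)\cup dom(\hat\psi))\,\big|\,\psi\subseteq\Phi,\hat\psi\subseteq\hat\Phi\big]$ (conditional expectations are taken on events of positive probability). *)

(* Defs.v *)
From HB Require Import structures.
From mathcomp Require Import all_boot all_order all_algebra.
Set Implicit Arguments. Unset Strict Implicit. Unset Printing Implicit Defensive.
Import Order.TTheory GRing.Theory Num.Theory.
Local Open Scope ring_scope.

Section Defs.
Variables (V : finType).

Definition sigma (L : {set V * V}) (T : {set V}) : nat :=
  #|[set x | [exists t in T, connect (fun a b => (a, b) \in L) t x]]|.

Definition L2 (L Lh : {set V * V}) (T : {set V}) : {set V * V} :=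
  L :|: [set e in Lh | e.1 \in T].

Definition Phi (L : {set V * V}) (u : V) : {set V} :=
  u |: [set z | (u, z) \in L].

(* A partial realisation is a partial map V -> {set V} (None = outside the domain) *)
Definition preal := V -> option {set V}.

Definition dom (psi : preal) : {set V} := [set u | psi u != None].

Definition is_partial_realisation (E : {set V * V}) (psi : preal) : Prop :=
  exists L : {set V * V}, L \subset E /\
    forall u, u \in dom psi -> psi u = Some (Phi L u).

Definition preal_sub (psi psi' : preal) : Prop :=
  dom psi \subset dom psi' /\ forall u, u \in dom psi -> psi' u = psi u.

Definition consistent (psi : preal) (L : {set V * V}) : bool :=
  [forall u, (u \in dom psi) ==> (psi u == Some (Phi L u))].

Definition sigma2 (psi : preal) (L Lh : {set V * V}) (T : {set V}) : nat :=
  sigma (L2 L Lh (T :\: dom psi)) T.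

Variables (R : realFieldType) (E : {set V * V}) (p : V -> V -> R).

Definition probL (L : {set V * V}) : R :=
  \prod_(e in E) (if e \in L then p e.1 e.2 else 1 - p e.1 e.2).

Definition prob_event (psi psih : preal) : R :=
  \sum_(L : {set V * V} | L \subset E) \sum_(Lh : {set V * V} | Lh \subset E)
    probL L * probL Lh * (consistent psi L && consistent psih Lh)%:R.

Definition Delta2 (psi psih : preal) (v : V) : R :=
  (\sum_(L : {set V * V} | L \subset E) \sum_(Lh : {set V * V} | Lh \subset E)
    probL L * probL Lh * (consistent psi L && consistent psih Lh)%:R *
    ((sigma2 psi L Lh (v |: (dom psi :|: dom psih)))%:R
       - (sigma2 psi L Lh (dom psi :|: dom psih))%:R))
  / prob_event psi psih.

End Defs.

(* Main.v *)
Require Import Defs.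
From HB Require Import structures.
From mathcomp Require Import all_boot all_order all_algebra.
From mathcomp Require Import zify ring lra.
Set Implicit Arguments. Unset Strict Implicit. Unset Printing Implicit Defensive.
Import Order.TTheory GRing.Theory Num.Theory.
Local Open Scope ring_scope.

Section Graph.
Variable V : finType.
Implicit Types (L G : {set V * V}) (T : {set V}).

Definition reach G T :=
  [set x | [exists t in T, connect (fun a b => (a, b) \in G) t x]].

Lemma sigmaE G T : sigma G T = #|reach G T|. Proof. by []. Qed.

Lemma reach_src G T x : x \in T -> x \in reach G T.
Proof. by move=> xT; rewrite inE; apply/existsP; exists x; rewrite xT connect0. Qed.

Lemma reach_step G T a b : a \in reach G T -> (a, b) \in G -> b \in reach G T.
Proof.
rewrite !inE => /existsP [t /andP [tT ct]] ab.
apply/existsP; exists t; rewrite tT /=.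
by apply: connect_trans ct _; apply: connect1.
Qed.

Lemma reach_min G T (P : {set V}) : T \subset P ->
  (forall a b, a \in P -> (a, b) \in G -> b \in P) -> reach G T \subset P.
Proof.
move=> TP cl; apply/subsetP => x; rewrite inE => /existsP [t /andP [tT]].
have H : forall s t, t \in P -> path (fun a b => (a,b) \in G) t s -> last t s \in P.
  by elim=> [|y s IH] t' tP //= /andP [ty ps]; apply: IH ps; exact: cl ty.
move=> /connectP [s ps ->]; apply: H ps; exact: (subsetP TP).
Qed.

Lemma reach_mono G G' T T' : G \subset G' -> T \subset T' ->
  reach G T \subset reach G' T'.
Proof.
move=> GG TT; apply: reach_min.
  by apply/subsetP => x xT; apply: reach_src; exact: (subsetP TT).
by move=> a b aR ab; apply: reach_step aR _; exact: (subsetP GG).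
Qed.

Lemma sigma2_mono (psi : preal V) L Lh T v :
  (sigma2 psi L Lh T <= sigma2 psi L Lh (v |: T))%N.
Proof.
rewrite /sigma2 !sigmaE; apply: subset_leq_card; apply: reach_mono.
  by rewrite /L2 setUS //; apply/subsetP => e; rewrite !inE => /andP [-> /andP [-> ->]]; rewrite orbT.
exact: subsetUr.
Qed.

Lemma gain_anti (psi : preal V) L Lh (D D' : {set V}) v : D \subset D' ->
  (sigma2 psi L Lh (v |: D') + sigma2 psi L Lh D <=
   sigma2 psi L Lh (v |: D) + sigma2 psi L Lh D')%N.
Proof.
move=> DD; rewrite /sigma2 !sigmaE.
set dp := dom psi.
set R1' := reach _ (v |: D'). set R0 := reach _ D.
set R1 := reach _ (v |: D). set R0' := reach _ D'.
have h1 : R1' \subset R0' :|: R1.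
  apply: reach_min.
    apply/subsetP => x; rewrite in_setU1 => /orP [/eqP -> | xD]; rewrite in_setU.
      by rewrite [_ \in R1]reach_src ?orbT // setU11.
    by rewrite [_ \in R0']reach_src.
  move=> a b aP; rewrite {1}/L2 => /setUP [abL | ].
    move: aP; rewrite in_setU => /orP [aR | aR]; rewrite in_setU.
      by rewrite (reach_step aR) // /L2 in_setU abL.
    by rewrite (reach_step aR) ?orbT // /L2 in_setU abL.
  rewrite inE /= in_setD in_setU1 => /andP [abLh /andP [adp /orP [/eqP av | aD']]].
    have vR : v \in R1 by rewrite reach_src // setU11.
    have e1 : (a, b) \in L2 L Lh ((v |: D) :\: dp).
      by subst a; rewrite /L2 in_setU in_set /= abLh in_setD adp setU11 orbT.
    by subst a; rewrite in_setU (reach_step vR e1) orbT.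
  case aD: (a \in D).
    have aR : a \in R1 by rewrite reach_src // in_setU1 aD orbT.
    have e1 : (a, b) \in L2 L Lh ((v |: D) :\: dp).
      by rewrite /L2 in_setU in_set /= in_setD in_setU1 abLh adp aD !orbT.
    by rewrite in_setU (reach_step aR) ?orbT.
  have aR : a \in R0' by rewrite reach_src.
  have e1 : (a, b) \in L2 L Lh (D' :\: dp).
    by rewrite /L2 in_setU in_set /= in_setD abLh adp aD' orbT.
  by rewrite in_setU (reach_step aR).
have h2 : R0 \subset R0' :&: R1.
  rewrite subsetI; apply/andP; split; apply: reach_mono.
  - by rewrite /L2 setUS //; apply/subsetP => e; rewrite !inE => /andP [-> /andP [-> ]] /(subsetP DD) ->.
  - by [].
  - by rewrite /L2 setUS //; apply/subsetP => e; rewrite !inE => /andP [-> /andP [-> ->]]; rewrite orbT.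
  - exact: subsetUr.
have := cardsUI R0' R1. have := subset_leq_card h1. have := subset_leq_card h2. lia.
Qed.
End Graph.



Section Alg.
Variables (V : finType) (R : realFieldType) (E : {set V * V}) (p : V -> V -> R).
Variable (A : {set V}).
Let EA := [set e in E | e.1 \in A].
Let ER := [set e in E | e.1 \notin A].

Lemma sum_split (h : {set V * V} -> R) :
  \sum_(L : {set V * V} | L \subset E) h L =
  \sum_(X : {set V * V} | X \subset EA) \sum_(Y : {set V * V} | Y \subset ER) h (X :|: Y).
Proof.
rewrite pair_big /=.
rewrite (reindex_onto (fun q : {set V * V} * {set V * V} => q.1 :|: q.2)
   (fun L => (L :&: EA, L :&: ER))) /=.
  apply: eq_bigl => -[X Y] /=; apply/idP/idP.
    move=> /andP [_ /eqP [h1 h2]]; apply/andP; split.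
      by rewrite -h1; exact: subsetIr.
    by rewrite -h2; exact: subsetIr.
  move=> /andP [XA YR]; apply/andP; split.
    rewrite subUset; apply/andP; split.
      by apply: subset_trans XA _; apply/subsetP => e; rewrite inE => /andP [].
    by apply: subset_trans YR _; apply/subsetP => e; rewrite inE => /andP [].
  apply/eqP; congr pair; apply/setP => e; rewrite !inE;
  move: (subsetP XA e) (subsetP YR e); rewrite !inE;
  by case: (e \in X); case: (e \in Y); case: (e \in E); case: (e.1 \in A) => //=;
    try (by move=> /(_ isT)); try (by move=> _ /(_ isT)).
move=> L LE; apply/setP => e; rewrite !inE.
move: (subsetP LE e); case: (e \in L) => //= /(_ isT) ->.
by case: (e.1 \in A).
Qed.

Lemma probL_split (X Y : {set V * V}) : X \subset EA -> Y \subset ER ->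
  probL E p (X :|: Y) = probL EA p X * probL ER p Y.
Proof.
move=> XA YR; rewrite /probL (bigID (fun e => e.1 \in A)) /=.
congr (_ * _); apply: eq_big => e; rewrite ?inE //.
  move=> /andP [eE eA].
  by move: (subsetP YR e); rewrite !inE eA andbF; case: (e \in Y) => [/(_ isT) //| _]; rewrite orbF.
move=> /andP [eE eA].
by move: (subsetP XA e); rewrite !inE (negbTE eA) andbF; case: (e \in X) => [/(_ isT) //| _].
Qed.

Lemma factor (c f : {set V * V} -> R) :
  (forall X Y : {set V * V}, X \subset EA -> Y \subset ER -> c (X :|: Y) = c X) ->
  (forall X Y : {set V * V}, X \subset EA -> Y \subset ER -> f (X :|: Y) = f Y) ->
  \sum_(L : {set V * V} | L \subset E) probL E p L * c L * f L =
  (\sum_(X : {set V * V} | X \subset EA) probL EA p X * c X) *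
  (\sum_(Y : {set V * V} | Y \subset ER) probL ER p Y * f Y).
Proof.
move=> hc hf; rewrite sum_split big_distrl; apply: eq_bigr => X XA.
rewrite big_distrr; apply: eq_bigr => Y YR /=.
rewrite hc // hf // probL_split //; ring.
Qed.
End Alg.



Lemma probL_ge0 (V : finType) (R : realFieldType) (E : {set V * V}) (p : V -> V -> R)
  (hp : forall u w, (u, w) \in E -> 0 <= p u w <= 1) L : 0 <= probL E p L.
Proof.
rewrite /probL; apply: prodr_ge0 => -[u w] /hp /andP [h0 h1] /=.
by case: ifP => _ //; rewrite subr_ge0.
Qed.

Section Rearr.
Variable R : realFieldType.
Lemma rearr1 (a b : R) (x y z : bool) :
  a * b * [&& x, y & z]%:R = b * z%:R * (a * (x && y)%:R).
Proof. by case: x; case: y; case: z; rewrite /=; ring. Qed.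
Lemma rearr2 (a b c : R) (x y z : bool) :
  a * b * [&& x, y & z]%:R * c = b * z%:R * (a * (x && y)%:R * c).
Proof. by case: x; case: y; case: z; rewrite /=; ring. Qed.
Lemma rearr3 (a b : R) (x y : bool) :
  a * b * (x && y)%:R = b * 1 * (a * (x && y)%:R).
Proof. ring. Qed.
Lemma rearr4 (a b c : R) (x y : bool) :
  a * b * (x && y)%:R * c = b * 1 * (a * (x && y)%:R * c).
Proof. ring. Qed.
Lemma aux_le (a b c d : R) : a + d <= c + b -> a - b <= c - d.
Proof. move=> h; lra. Qed.
Lemma aux_nat (a b c d : nat) : (a + d <= c + b)%N -> a%:R - b%:R <= c%:R - d%:R :> R.
Proof. by move=> h; apply: aux_le; rewrite -!natrD ler_nat. Qed.
Lemma aux_div (ac a1 bF bQ : R) : ac != 0 -> a1 != 0 ->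
  ac * bF / (ac * bQ) = a1 * bF / (a1 * bQ).
Proof. by move=> h1 h2; rewrite !invfM mulrACA [in RHS]mulrACA !mulfV // !mul1r. Qed.
End Rearr.

Theorem lemma14 (V : finType) (R : realFieldType) (E : {set V * V})
    (p : V -> V -> R)
    (hp : forall u w, (u, w) \in E -> 0 <= p u w <= 1)
    (psi psih psih' : preal V)
    (Hpsi : is_partial_realisation E psi)
    (Hpsih : is_partial_realisation E psih)
    (Hpsih' : is_partial_realisation E psih')
    (Hsub : preal_sub psih psih')
    (Hpos : 0 < prob_event E p psi psih)
    (Hpos' : 0 < prob_event E p psi psih')
    (v : V) :
  Delta2 E p psi psih' v <= Delta2 E p psi psih v.
Proof.
have Hdom : dom psih \subset dom psih' by case: Hsub.
set dp := dom psi.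
set D := dp :|: dom psih. set D' := dp :|: dom psih'.
have DD : D \subset D' by apply: setUS.
have w0 : forall L Lh, 0 <= probL E p L * probL E p Lh.
  by move=> L Lh; apply: mulr_ge0; apply: probL_ge0.
have RHS0 : 0 <= Delta2 E p psi psih v.
  rewrite /Delta2; apply: divr_ge0; last exact: ltW.
  apply: sumr_ge0 => L _; apply: sumr_ge0 => Lh _; apply: mulr_ge0.
    by apply: mulr_ge0.
  by rewrite subr_ge0 ler_nat sigma2_mono.
case vD': (v \in D').
  have -> : Delta2 E p psi psih' v = 0.
    rewrite /Delta2 big1 ?mul0r // => L _; rewrite big1 // => Lh _.
    have -> : v |: D' = D' by apply/setUidPr; rewrite sub1set vD'.
    by rewrite subrr mulr0.
  exact: RHS0.
set A := dom psih' :\: dom psih.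
set EA := [set e in E | e.1 \in A]. set ER := [set e in E | e.1 \notin A].
pose C (Lh : {set V * V}) := [forall u in A, psih' u == Some (Phi Lh u)].
have cons_split : forall Lh, consistent psih' Lh = consistent psih Lh && C Lh.
  move=> Lh; rewrite /consistent /C; apply/idP/idP.
    move=> /forallP H; apply/andP; split; apply/forallP => u; apply/implyP => uD.
      have uD' : u \in dom psih' by apply: (subsetP Hdom).
      by move/implyP: (H u) => /(_ uD'); rewrite (proj2 Hsub u uD).
    by move: uD; rewrite in_setD => /andP [_ uD']; exact: (implyP (H u)).
  move=> /andP [/forallP H1 /forallP H2]; apply/forallP => u; apply/implyP => uD'.
  case uD: (u \in dom psih).
    by rewrite (proj2 Hsub u uD); exact: (implyP (H1 u)).
  by apply: (implyP (H2 u)); rewrite in_setD uD uD'.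
have PhiX : forall (X Y : {set V * V}) u, Y \subset ER -> u \in A ->
    Phi (X :|: Y) u = Phi X u.
  move=> X Y u YR uA; apply/setP => z; rewrite /Phi !in_setU1 !in_set.
  move: (subsetP YR (u, z)); rewrite in_set /= uA andbF.
  by case: ((u, z) \in Y) => [/(_ isT) //| _]; rewrite orbF.
have PhiY : forall (X Y : {set V * V}) u, X \subset EA -> u \notin A ->
    Phi (X :|: Y) u = Phi Y u.
  move=> X Y u XA uA; apply/setP => z; rewrite /Phi !in_setU1 !in_set.
  move: (subsetP XA (u, z)); rewrite in_set /= (negbTE uA) andbF.
  by case: ((u, z) \in X) => [/(_ isT) //| _] /=.
have Cdep : forall X Y : {set V * V}, X \subset EA -> Y \subset ER ->
    (C (X :|: Y))%:R = (C X)%:R :> R.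
  move=> X Y XA YR; suff -> : C (X :|: Y) = C X by []; rewrite /C.
  by apply/forall_inP/forall_inP => H u uA; move: (H u uA); rewrite PhiX.
have consdep : forall X Y : {set V * V}, X \subset EA ->
    consistent psih (X :|: Y) = consistent psih Y.
  move=> X Y XA; rewrite /consistent.
  by apply/forallP/forallP => H u; apply/implyP => uD; move/implyP: (H u) => /(_ uD);
    rewrite PhiY // in_setD uD.
have sigdep : forall (X Y L : {set V * V}) (T : {set V}),
    X \subset EA -> (forall u, u \in T -> u \in A -> u \in dp) ->
    sigma2 psi L (X :|: Y) T = sigma2 psi L Y T.
  move=> X Y L T XA HT; rewrite /sigma2; congr sigma; rewrite /L2; congr (_ :|: _).
  apply/setP => e; rewrite !in_set.
  case eX: (e \in X) => //=.
  have eA : e.1 \in A by move: (subsetP XA e eX); rewrite in_set => /andP [].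
  case eT: (e.1 \in T); last by rewrite !andbF.
  by move: (HT _ eT eA); rewrite /dp in_set => ->; rewrite /= !andbF.
have HT1 : forall u, u \in v |: D -> u \in A -> u \in dp.
  move=> u; rewrite in_setU1 in_setU in_setD => /orP [/eqP -> | /orP [// | uh]].
    by move=> /andP [_ vh]; move: vD'; rewrite in_setU vh orbT.
  by rewrite uh.
have HT0 : forall u, u \in D -> u \in A -> u \in dp.
  by move=> u uD; apply: HT1; rewrite in_setU1 uD orbT.

pose g (L Lh : {set V * V}) : R :=
  (sigma2 psi L Lh (v |: D))%:R - (sigma2 psi L Lh D)%:R.
pose F (Lh : {set V * V}) := \sum_(L : {set V * V} | L \subset E)
  probL E p L * (consistent psi L && consistent psih Lh)%:R * g L Lh.
pose Q (Lh : {set V * V}) := \sum_(L : {set V * V} | L \subset E)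
  probL E p L * (consistent psi L && consistent psih Lh)%:R.
have Fdep : forall X Y : {set V * V}, X \subset EA -> Y \subset ER -> F (X :|: Y) = F Y.
  move=> X Y XA YR; apply: eq_bigr => L _.
  by rewrite consdep // /g !(sigdep X Y L) .
have Qdep : forall X Y : {set V * V}, X \subset EA -> Y \subset ER -> Q (X :|: Y) = Q Y.
  by move=> X Y XA YR; apply: eq_bigr => L _; rewrite consdep.
have one_dep : forall X Y : {set V * V}, X \subset EA -> Y \subset ER ->
    (fun _ : {set V * V} => 1 : R) (X :|: Y) = (fun _ => 1 : R) X by [].
set ac := \sum_(X : {set V * V} | X \subset EA) probL EA p X * (C X)%:R.
set a1 := \sum_(X : {set V * V} | X \subset EA) probL EA p X * 1.
set bF := \sum_(Y : {set V * V} | Y \subset ER) probL ER p Y * F Y.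
set bQ := \sum_(Y : {set V * V} | Y \subset ER) probL ER p Y * Q Y.
have eP' : prob_event E p psi psih' = ac * bQ.
  transitivity (\sum_(L : {set V * V} | L \subset E) probL E p L * (C L)%:R * Q L);
    last exact: (@factor V R E p A (fun Lh => (C Lh)%:R) Q Cdep Qdep).
  rewrite /prob_event exchange_big; apply: eq_bigr => Lh _.
  rewrite /Q big_distrr; apply: eq_bigr => L _ /=; rewrite cons_split.
  exact: rearr1.
have eP : prob_event E p psi psih = a1 * bQ.
  transitivity (\sum_(L : {set V * V} | L \subset E) probL E p L * 1 * Q L);
    last exact: (@factor V R E p A (fun Lh => 1) Q one_dep Qdep).
  rewrite /prob_event exchange_big; apply: eq_bigr => Lh _.
  rewrite /Q big_distrr; apply: eq_bigr => L _ /=.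
  exact: rearr3.
have eN : Delta2 E p psi psih v = (a1 * bF) / prob_event E p psi psih.
  congr (_ / _).
  transitivity (\sum_(L : {set V * V} | L \subset E) probL E p L * 1 * F L);
    last exact: (@factor V R E p A (fun Lh => 1) F one_dep Fdep).
  rewrite exchange_big; apply: eq_bigr => Lh _.
  rewrite /F big_distrr; apply: eq_bigr => L _ /=.
  exact: rearr4.
have eN' : Delta2 E p psi psih' v <= (ac * bF) / prob_event E p psi psih'.
  apply: ler_wpM2r; first by rewrite invr_ge0 ltW.
  rewrite (_ : ac * bF = \sum_(L : {set V * V} | L \subset E) probL E p L * (C L)%:R * F L);
    last by symmetry; exact: (@factor V R E p A (fun Lh => (C Lh)%:R) F Cdep Fdep).
  rewrite exchange_big; apply: ler_sum => Lh _.
  rewrite /F big_distrr; apply: ler_sum => L _ /=.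
  apply: (@le_trans _ _ (probL E p L * probL E p Lh * (consistent psi L && consistent psih' Lh)%:R * g L Lh)).
    apply: ler_wpM2l; first by apply: mulr_ge0.
    rewrite /g.
    exact: (aux_nat R (gain_anti psi L Lh v DD)).
  by rewrite cons_split rearr2.
have ac0 : ac != 0.
  by apply/eqP => h; move: Hpos'; rewrite eP' h mul0r ltxx.
have a10 : a1 != 0.
  by apply/eqP => h; move: Hpos; rewrite eP h mul0r ltxx.
rewrite eN. apply: (le_trans eN'). rewrite eP' eP (aux_div _ _ ac0 a10).
exact: le_refl.
Qed.
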